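(* Let $p$ be an odd prime, $K$ a field of characteristic $p$, $s\geq1$ an integer, and $n=1+p^s$. Let $X$ be the $n\times n$ matrix with entries $1$ in positions $(i,i+1)$, $1\leq i\leq n-1$, and $0$ elsewhere, and let $B=1+X$. Let $k$ be an integer with $1\leq k\leq s$, and let $A$ be the unique matrix in $\mathrm{U}_n(K)$ whose last column is zero except for the entry $1$ in position $(n,n)$ and which satisfies $ABA^{-1}=B^{1+p^k}$. Then the order of $A$ is $p^{s+1-k}$.
   Context: $\mathrm{U}_n(K)$ is the group of upper-triangular unipotent $n\times n$ matrices over $K$. (The existence and uniqueness of such $A$ is part of the setup.) *)

(* Defs.v *)
From HB Require Import structures.
From mathcomp Require Import all_boot all_order all_algebra.
Set Implicit Arguments. Unset Strict Implicit. Unset Printing Implicit Defensive.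
Import GRing.Theory.
Local Open Scope ring_scope.

(* X : the nilpotent matrix with 1 at positions (i, i+1) (0-indexed here) *)
Definition shiftX (K : fieldType) (n : nat) : 'M[K]_n :=
  \matrix_(i < n, j < n) ((j == i.+1 :> nat)%:R).

Definition unitriangular (K : fieldType) (n : nat) (A : 'M[K]_n) : Prop :=
  (forall i j : 'I_n, (j < i)%N -> A i j = 0) /\ (forall i : 'I_n, A i i = 1).

Definition mx_order_is (K : fieldType) (n : nat) (A : 'M[K]_n.+1) (m : nat) : Prop :=
  (0 < m)%N /\ A ^+ m = 1 /\ (forall r : nat, (0 < r)%N -> A ^+ r = 1 -> (m <= r)%N).

(* Main.v *)
Require Import Defs.
From HB Require Import structures.
From mathcomp Require Import all_boot all_order all_algebra.
From mathcomp Require Import zify ring.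
Import GRing.Theory.
Local Open Scope ring_scope.

Set Implicit Arguments. Unset Strict Implicit.
Section NT.
Local Open Scope nat_scope.

Lemma binom3 (y n : nat) : exists c, (1 + y) ^ n = 1 + n * y + 'C(n, 2) * y ^ 2 + y ^ 3 * c.
Proof.
elim: n => [|n [c IH]]; first by exists 0; rewrite expn0 mul0n muln0 bin_small.
exists ('C(n,2) + c + c * y).
rewrite expnS IH binS bin1.
ring.
Qed.

Lemma step1 (p t a : nat) : prime p -> odd p -> (1 <= t)%N ->
  exists c, (1 + p ^ t * a) ^ p = 1 + p ^ t.+1 * (a + p * c).
Proof.
move=> pp op t1.
have [c E] := binom3 (p ^ t * a) p.
have p2 : (2 < p)%N.
  have := prime_gt1 pp; case: p op {pp E} => [|[|[]]] //.
have /dvdnP [q Hq] := prime_dvd_bin (k:=2) pp p2.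
exists (q * p ^ t.-1 * a ^ 2 + p ^ (t.-1 + t.-1) * a ^ 3 * c).
rewrite E Hq.
case: t t1 {E} => [//|t] _ /=.
rewrite !expnS !expnD. ring.
Qed.

Lemma powstep (p k j : nat) : prime p -> odd p -> (1 <= k)%N ->
  exists a, (1 + p ^ k) ^ (p ^ j) = 1 + p ^ (k + j) * a /\ ~~ (p %| a).
Proof.
move=> pp op k1.
elim: j => [|j [a [E na]]].
  exists 1; rewrite expn0 expn1 addn0 muln1 dvdn1; split => //; by case: eqP pp => // ->.
have [c Ec] := @step1 p (k + j) a pp op (leq_trans k1 (leq_addr j k)).
exists (a + p * c); split.
  by rewrite expnS mulnC expnM E Ec addnS.
by rewrite dvdn_addl ?dvdn_mulr.
Qed.
End NT.

Section M.
Variable K : fieldType.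
Variable n : nat.
Local Notation X := (shiftX K n.+1).

Lemma Xpow (i : nat) (a b : 'I_n.+1) : (X ^+ i) a b = (b == (a + i)%N :> nat)%:R.
Proof.
elim: i b => [|i IH] b.
  by rewrite expr0 mxE addn0 eq_sym.
rewrite exprSr -mulmxE mxE.
under eq_bigr => l _ do rewrite IH mxE.
have [lt|ge] := ltnP (a + i) n.+1.
  rewrite (bigD1 (Ordinal lt)) //= eqxx mul1r big1 ?addr0.
    by rewrite addnS.
  move=> l /eqP nl; case: eqP => [E|]; last by rewrite mul0r.
  by case: nl; apply: val_inj.
rewrite big1.
  case: eqP => // E; have := ltn_ord b; lia.
move=> l _; case: eqP => [E|]; last by rewrite mul0r.
have := ltn_ord l; lia.
Qed.

Lemma Xpow_big (i : nat) : (n < i)%N -> X ^+ i = 0.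
Proof.
move=> h; apply/matrixP => a b; rewrite Xpow mxE.
case: eqP => // E; have := ltn_ord b; lia.
Qed.

Lemma comm1X (M : 'M[K]_n.+1) : GRing.comm 1 M.
Proof. by rewrite /GRing.comm mul1r mulr1. Qed.

Lemma pchar_mx p : p \in [pchar K] -> p \in [pchar 'M[K]_n.+1].
Proof.
move=> pc; apply/andP; split; first exact: pcharf_prime pc.
apply/eqP/matrixP => i j; rewrite mulmxnE mxE.
by case: (i == j); rewrite mxE ?mul0rn // (pcharf0 pc).
Qed.

Lemma Bpow p t : p \in [pchar K] -> (1 + X) ^+ (p ^ t) = 1 + X ^+ (p ^ t).
Proof.
move=> pc; elim: t => [|t IH]; first by rewrite expn0 !expr1.
rewrite expnSr exprM IH.
have := pFrobenius_autD_comm (pchar_mx pc) (comm1X (X ^+ (p ^ t))).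
by rewrite !pFrobenius_autE expr1n -exprM.
Qed.

Lemma sqzero (Z : 'M[K]_n.+1) a : Z * Z = 0 -> (1 + Z) ^+ a = 1 + Z *+ a.
Proof.
move=> Z2; elim: a => [|a IH]; first by rewrite expr0 mulr0n addr0.
by rewrite exprSr IH mulrDl mul1r mulrDr mulr1 mulrnAl Z2 mul0rn addr0 mulrS addrA.
Qed.

Lemma commutant (M : 'M[K]_n.+1) : M * X = X * M ->
  (forall i : 'I_n.+1, M i ord_max = (i == ord_max)%:R) -> M = 1.
Proof.
move=> cMX lastc.
have E1 (i j : 'I_n.+1) (i' j' : 'I_n.+1) : i'= i.+1 :> nat -> j' = j.+1 :> nat -> M i j = M i' j'.
  move=> ei ej.
  have := congr1 (fun Q : 'M[K]_n.+1 => Q i j') cMX; rewrite -!mulmxE !mxE.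
  rewrite (bigD1 j) //= mxE ej eqxx mulr1 big1; last first.
    move=> l /eqP nl; rewrite mxE; case: eqP => [e|]; last by rewrite mulr0.
    by case: nl; apply: val_inj => /=; lia.
  rewrite (bigD1 i') //= mxE ei eqxx mul1r [X in _ = _ + X -> _]big1; last first.
    move=> l /eqP nl; rewrite mxE; case: eqP => [e|]; last by rewrite mul0r.
    by case: nl; apply: val_inj => /=; lia.
  by rewrite !addr0.
have E2 (j j' : 'I_n.+1) : j' = j.+1 :> nat -> M ord_max j = 0.
  move=> ej.
  have := congr1 (fun Q : 'M[K]_n.+1 => Q ord_max j') cMX; rewrite -!mulmxE !mxE.
  rewrite (bigD1 j) //= mxE ej eqxx mulr1 big1; last first.
    move=> l /eqP nl; rewrite mxE; case: eqP => [e|]; last by rewrite mulr0.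
    by case: nl; apply: val_inj => /=; lia.
  rewrite addr0 big1 // => l _; rewrite mxE; case: eqP => [e|]; last by rewrite mul0r.
  have := ltn_ord l; rewrite e /=; lia.
have key d : forall i j : 'I_n.+1, (j + d)%N = n -> M i j = (i == j)%:R.
  elim: d => [|d IH] i j hj.
    have -> : j = ord_max by apply: val_inj => /=; lia.
    exact: lastc.
  have hj1 : (j.+1 < n.+1)%N by lia.
  have [hi|hi] := ltnP i n.
    have hi1 : (i.+1 < n.+1)%N by lia.
    rewrite (E1 i j (Ordinal hi1) (Ordinal hj1)) // IH /=; last by lia.
    by congr (_%:R); rewrite -[LHS]val_eqE /= eqSS val_eqE.
  have -> : i = ord_max by apply: val_inj => /=; have := ltn_ord i; lia.
  rewrite (E2 j (Ordinal hj1)) //.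
  case: eqP => // e; move: hj; rewrite -e /=; lia.
apply/matrixP => i j; rewrite (key (n - j)%N) ?mxE //.
have := ltn_ord j; lia.
Qed.
End M.

Unset Implicit Arguments. Set Strict Implicit.
Theorem proposition3p6 (p : nat) (K : fieldType) (s k : nat)
  (A : 'M[K]_((p ^ s).+1)) :
  prime p -> odd p -> p \in [pchar K] ->
  (1 <= s)%N -> (1 <= k <= s)%N ->
  unitriangular A ->
  (forall i : 'I_((p ^ s).+1), A i ord_max = (i == ord_max)%:R) ->
  A *m (1 + shiftX K (p ^ s).+1) *m invmx A = (1 + shiftX K (p ^ s).+1) ^+ (1 + p ^ k) ->
  mx_order_is A (p ^ (s + 1 - k)).
Proof.
move=> pp op pc s1 /andP[k1 ks] [Alow Adiag] Alast Hconj.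
have Au : A \in unitmx.
  rewrite unitmxE -det_tr det_trig.
    by rewrite big1 ?unitr1 // => i _; rewrite mxE Adiag.
  apply/forallP => i; apply/forallP => j; apply/implyP => lt; rewrite mxE Alow //.
set X := shiftX K (p ^ s).+1.
set B := 1 + X.
set e := (1 + p ^ k)%N.
have AB : A * B = B ^+ e * A.
  by rewrite -Hconj -!mulmxE mulmxKV.
have ABj j : A * B ^+ j = B ^+ (e * j) * A.
  elim: j => [|j IH]; first by rewrite expr0 muln0 expr0 mulr1 mul1r.
  by rewrite exprSr mulrA IH -mulrA AB mulrA -exprD mulnS addnC.
have ABm m : A ^+ m * B = B ^+ (e ^ m) * A ^+ m.
  elim: m => [|m IH]; first by rewrite !expr0 expn0 expr1 mul1r mulr1.
  by rewrite exprS -mulrA IH mulrA ABj -mulrA -exprS expnS.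
have Alastm m : forall i, (A ^+ m) i ord_max = (i == ord_max)%:R.
  elim: m => [|m IH] i; first by rewrite expr0 mxE.
  rewrite exprS -mulmxE mxE (bigD1 ord_max) //= IH eqxx mulr1 big1 ?addr0 //.
  by move=> l /negbTE nl; rewrite IH nl mulr0.
have comm_one m : A ^+ m * B = B * A ^+ m -> A ^+ m = 1.
  move=> c; apply: (commutant _ (Alastm m)).
  by move: c; rewrite /B mulrDr mulrDl mulr1 mul1r => /addrI.
have ps0 : (0 < p ^ s)%N by rewrite expn_gt0 prime_gt0.
have BP : B ^+ (p ^ s.+1) = 1.
  rewrite Bpow // Xpow_big ?addr0 // ltn_exp2l ?prime_gt1 //.
set Z := X ^+ (p ^ s).
have Bs : B ^+ (p ^ s) = 1 + Z by rewrite Bpow.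
have Z2 : Z * Z = 0 by rewrite -exprD Xpow_big //; lia.
have Zent : Z ord0 ord_max = 1 by rewrite Xpow /= eqxx.
have m0gt : (0 < p ^ (s + 1 - k))%N by rewrite expn_gt0 prime_gt0.
have A1 : A ^+ (p ^ (s + 1 - k)) = 1.
  apply: comm_one; rewrite ABm.
  have [a [Ea _]] := @powstep p k (s + 1 - k) pp op k1.
  rewrite /e Ea.
  have -> : (k + (s + 1 - k))%N = s.+1 by lia.
  by rewrite exprD expr1 exprM BP expr1n mulr1.
have An1 : A ^+ (p ^ (s - k)) != 1.
  apply/eqP => H.
  have [a [Ea na]] := @powstep p k (s - k) pp op k1.
  have := ABm (p ^ (s - k))%N; rewrite H mul1r mulr1 /e Ea.
  have -> : (k + (s - k))%N = s by lia.
  rewrite exprD expr1 exprM Bs sqzero // => HB.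
  have HP : B ^+ (p ^ s.+1) = B ^+ (p ^ s.+1) * (1 + Z *+ a).
    have Pgt : (0 < p ^ s.+1)%N by rewrite expn_gt0 prime_gt0.
    by rewrite -(prednK Pgt) exprSr -mulrA -HB.
  move: HP; rewrite BP mul1r => /(congr1 (fun Q : 'M[K]_((p ^ s).+1) => Q ord0 ord_max)).
  have nz : (ord0 == ord_max :> 'I_((p ^ s).+1)) = false.
    by apply/negbTE; rewrite -val_eqE /= eq_sym -lt0n.
  rewrite mxE [in RHS]mxE mulmxnE Zent mxE nz /=.
  rewrite add0r => /eqP; rewrite eq_sym -(dvdn_pcharf pc) => pa.
  by rewrite pa in na.
split=> //; split=> // r r0 Ar.
have [a _ /dvdnP [c Ec]] := Bezoutl (p ^ (s + 1 - k)) r0.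
set g := gcdn r (p ^ (s + 1 - k)) in Ec.
have Ag : A ^+ g = 1.
  have : A ^+ (g + a * p ^ (s + 1 - k)) = 1 by rewrite Ec mulnC exprM Ar expr1n.
  by rewrite exprD mulnC exprM A1 expr1n mulr1.
have : (g %| p ^ (s + 1 - k))%N by apply: dvdn_gcdr.
case/(dvdn_pfactor _ _ pp) => i hi gi.
have [hi2|hi2] := leqP i (s - k).
  have /dvdnP [q Eq] : (g %| p ^ (s - k))%N by rewrite gi dvdn_exp2l.
  by move: An1; rewrite Eq mulnC exprM Ag expr1n eqxx.
have gm : g = (p ^ (s + 1 - k))%N by rewrite gi; congr (expn _ _); lia.
apply: dvdn_leq r0 _; rewrite -gm; exact: dvdn_gcdl.
Qed.
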